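(* Let $n=p_1^{\alpha_1}p_2^{\alpha_2}p_3^{\alpha_3}$, where $\alpha_1,\alpha_2,\alpha_3$ are positive integers and $p_1<p_2<p_3$ are primes. Let $i,j\in\{1,2,3\}$ with $i<j$. If $1\leq\beta_i\leq\alpha_i$ and $2\leq\beta_j\leq\alpha_j$, then $\deg(p_i^{\beta_i}p_j^{\beta_j})>\deg(p_i^{\beta_i-1}p_j^{\beta_j})$ in $\mathcal{P}(C_n)$.
   Context: For a finite group $G$, the power graph $\mathcal{P}(G)$ is the simple undirected graph with vertex set $G$ in which two distinct vertices are adjacent if one is an integral power of the other. $C_n$ denotes the cyclic group of order $n$, identified with $\mathbb{Z}_n=\{0,1,\ldots,n-1\}$, so a positive divisor $d$ of $n$ is regarded as the element $d\bmod n\in\mathbb{Z}_n$. $\deg(a)$ is the degree of vertex $a$ in $\mathcal{P}(C_n)$. *)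

(* Defs.v *)
From mathcomp Require Import all_boot.
Set Implicit Arguments. Unset Strict Implicit. Unset Printing Implicit Defensive.

(* C_n identified with Z_n = {0,...,n-1} (additive).  In additive notation,
   "b is an integral power of a" means b = k*a (mod n) for some integer k;
   since k*a mod n only depends on k mod n, k ranges over 0..n-1. *)
Definition is_power (n a b : nat) : bool :=
  [exists k : 'I_n, b %% n == (k * a) %% n].

Definition pg_adj (n a b : nat) : bool :=
  (a %% n != b %% n) && (is_power n a b || is_power n b a).

Definition pg_deg (n a : nat) : nat :=
  #|[set b : 'I_n | pg_adj n a b]|.

Definition tri (x y z : nat) (i : 'I_3) : nat := nth 0 [:: x; y; z] i.

(* Main.v *)
Require Import Defs.
From mathcomp Require Import all_boot zify.
From Stdlib Require Import ArithRing.

Lemma dvd_mod_of d m n : d %| m -> d %| n -> d %| m %% n.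
Proof. by move=> dm dn; rewrite /dvdn (modn_dvdm _ dn) -/(dvdn d m). Qed.

Lemma is_powerE n a b : 0 < n -> is_power n a b = (gcdn a n %| b %% n).
Proof.
move=> n0; apply/existsP/idP.
  case=> k /eqP ->; apply: dvd_mod_of; last exact: dvdn_gcdr.
  by apply: dvdn_mull; exact: dvdn_gcdl.
case: (posnP a) => [->|a0].
  rewrite gcd0n => H.
  exists (Ordinal n0) => /=; rewrite muln0 mod0n.
  case: (posnP (b %% n)) => [//|bpos].
  by have := dvdn_leq bpos H; rewrite leqNgt ltn_pmod.
case: (egcdnP n a0) => km kn Hk _ /dvdnP [q Hq].
exists (Ordinal (ltn_pmod (km * q) n0)) => /=.
apply/eqP; rewrite modnMml -mulnA (mulnC q) mulnA Hk mulnDl mulnAC modnMDl.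
by rewrite (mulnC _ q) -Hq modn_mod.
Qed.

Lemma totient_card m : totient m = #|[set c : 'I_m | coprime m c]|.
Proof.
rewrite totient_count_coprime big_mkord -sum1_card [RHS]big_mkcond /=.
by apply: eq_bigr => i _; rewrite inE; case: coprime.
Qed.

Lemma card_mult n d m (x0 : 'I_n) : n = d * m -> 0 < d ->
  #|[set b : 'I_n | d %| b]| = m.
Proof.
move=> nE d0.
pose f := fun c : 'I_m => insubd x0 (c * d).
have fv : forall c : 'I_m, val (f c) = c * d.
  move=> c; rewrite /f val_insubd.
  have -> : c * d < n by rewrite nE mulnC ltn_pmul2l.
  by [].
have -> : [set b : 'I_n | d %| b] = f @: setT.
  apply/setP => b; rewrite inE; apply/idP/imsetP.
    move=> /dvdnP [q Hq].
    have qm : q < m by rewrite -(ltn_pmul2r d0) -Hq mulnC -nE.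
    exists (Ordinal qm); first by rewrite inE.
    by apply: val_inj; rewrite fv /=.
  by case=> c _ ->; rewrite fv dvdn_mull.
rewrite card_imset ?cardsT ?card_ord //.
move=> c1 c2 /(congr1 val); rewrite !fv => /eqP; rewrite eqn_pmul2r // => /eqP.
exact: val_inj.
Qed.

Lemma card_gcd_ge n e m (x0 : 'I_n) : n = e * m -> 0 < e ->
  totient m <= #|[set b : 'I_n | gcdn b n == e]|.
Proof.
move=> nE e0.
pose f := fun c : 'I_m => insubd x0 (c * e).
have fv : forall c : 'I_m, val (f c) = c * e.
  move=> c; rewrite /f val_insubd.
  have -> : c * e < n by rewrite nE mulnC ltn_pmul2l.
  by [].
rewrite totient_card -(card_imset _ (f := f)); last first.
  move=> c1 c2 /(congr1 val); rewrite !fv => /eqP; rewrite eqn_pmul2r // => /eqP.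
  exact: val_inj.
apply: subset_leq_card; apply/subsetP => b /imsetP [c].
rewrite !inE => cop ->; rewrite fv nE (mulnC e) -muln_gcdl gcdnC.
by rewrite (eqP cop) mul1n.
Qed.

Lemma deg_general n X Y P M e1 e2 m1 m2 :
  X = P * Y -> 1 < P -> 0 < Y -> 1 < M -> n = X * M ->
  n = e1 * m1 -> n = e2 * m2 -> 0 < e1 -> 0 < e2 ->
  e1 %| X -> e2 %| X -> ~~ (Y %| e1) -> ~~ (Y %| e2) ->
  ~~ (e1 %| Y) -> ~~ (e2 %| Y) -> e1 != e2 ->
  P * M - M < totient m1 + totient m2 ->
  pg_deg n Y < pg_deg n X.
Proof.
move=> XE P1 Y0 M1 nE n1 n2 e10 e20 e1X e2X Ye1 Ye2 e1Y e2Y e12 Htot.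
have X0 : 0 < X by rewrite XE muln_gt0 Y0 ltnW.
have Xn : X < n by rewrite nE -{1}(muln1 X) ltn_pmul2l.
have YX : Y < X by rewrite XE -{1}(mul1n Y) ltn_pmul2r.
have Yn : Y < n by apply: ltn_trans Xn.
have n0 : 0 < n by apply: leq_ltn_trans Xn.
have Xdn : X %| n by rewrite nE dvdn_mulr.
have YdX : Y %| X by rewrite XE dvdn_mull.
have Ydn : Y %| n by apply: dvdn_trans Xdn.
have adjE : forall a (b : 'I_n), a < n -> a %| n ->
    pg_adj n a b = (a != b) && ((a %| b) || (gcdn b n %| a)).
  move=> a b an adn; rewrite /pg_adj !is_powerE // !modn_small //.
  by rewrite (gcdn_idPl adn).
pose x0 := Ordinal Xn; pose y0 := Ordinal Yn.
rewrite /pg_deg.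
set NX := [set b : 'I_n | pg_adj n X b].
set NY := [set b : 'I_n | pg_adj n Y b].
rewrite -(cardsID NX NY) -(cardsID NY NX) setIC ltn_add2l.
pose DY := [set b : 'I_n | Y %| b] :\: [set b : 'I_n | X %| b].
pose A := [set b : 'I_n | gcdn b n == e1].
pose B := [set b : 'I_n | gcdn b n == e2].
have h1 : #|NY :\: NX| <= 1 + (P * M - M).
  have -> : P * M - M = #|DY|.
    rewrite /DY cardsD (setIidPr _).
      rewrite (@card_mult n Y (P * M) x0) ?(@card_mult n X M x0) //.
      by rewrite nE XE mulnA (mulnC Y).
    apply/subsetP => b; rewrite !inE; exact: dvdn_trans.
  apply: leq_trans (_ : #|x0 |: DY| <= _); last first.
    by rewrite cardsU1 leq_add2r; case: (_ \notin _).
  apply/subset_leq_card/subsetP => b; rewrite !inE !adjE //.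
  case/and3P => HX _ Hb.
  case: (eqVneq b x0) => //= bx.
  have Xb : X != b by apply: contra bx => /eqP Xb; apply/eqP/val_inj.
  rewrite Xb /= negb_or in HX; case/andP: HX => nXb ngX.
  case/orP: Hb => Hb; first by rewrite nXb Hb.
  by rewrite (dvdn_trans Hb YdX) in ngX.
have h2 : 1 + (totient m1 + totient m2) <= #|NX :\: NY|.
  have eA : forall b : 'I_n, b \in A -> gcdn b n = e1 by move=> b; rewrite inE => /eqP.
  have eB : forall b : 'I_n, b \in B -> gcdn b n = e2 by move=> b; rewrite inE => /eqP.
  have AB : A :&: B = set0.
    apply/setP => b; rewrite !inE; case: (eqVneq (gcdn b n) e1) => //= ->.
    by rewrite (negbTE e12).
  have yAB : y0 \notin A :|: B.
    rewrite !inE /= (gcdn_idPl Ydn); apply/negP => /orP [] /eqP E.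
      by move: Ye1; rewrite -E dvdnn.
    by move: Ye2; rewrite -E dvdnn.
  apply: leq_trans (_ : #|y0 |: (A :|: B)| <= _).
    rewrite cardsU1 yAB cardsU AB cards0 subn0 leq_add2l.
    by apply: leq_add; [exact: card_gcd_ge n1 e10 | exact: card_gcd_ge n2 e20].
  apply/subset_leq_card/subsetP => b; rewrite !inE !adjE //.
  case/orP => [/eqP -> | Hb] /=.
    by rewrite eqxx /= (gcdn_idPl Ydn) YdX orbT (gtn_eqF YX).
  have [g gd gY] : exists2 g, gcdn b n = g & (g %| X) && ~~ (Y %| g) && ~~ (g %| Y).
    by case/orP: Hb => /eqP H; exists (gcdn b n) => //; rewrite H ?e1X ?e2X ?Ye1 ?Ye2 ?e1Y ?e2Y.
  case/andP: gY => /andP [gX' Yg] gY'.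
  have YNb : ~~ (Y %| b).
    by apply: contra Yg => Yb; rewrite -gd dvdn_gcd Yb Ydn.
  rewrite gd (negbTE YNb) (negbTE gY') andbF /= gX' orbT andbT.
  have XNb : ~~ (X %| b) by apply: contra YNb; apply: dvdn_trans.
  by apply/negP => /eqP Xb; move: XNb; rewrite Xb dvdnn.
by apply: leq_ltn_trans h1 (leq_trans _ h2); rewrite ltn_add2l.
Qed.

Lemma cop_pr P R : prime P -> prime R -> P != R -> coprime P R.
Proof. by move=> pP pR PR; rewrite prime_coprime // dvdn_prime2 // (negbTE PR). Qed.

Lemma tot_pow_ge P u : prime P -> P ^ u * P.-1 <= totient (P ^ u) * P.
Proof.
move=> pP; case: u => [|u].
  have -> : totient (P ^ 0) = 1 by []. rewrite expn0 !mul1n; exact: leq_pred.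
rewrite totient_pfactor //= expnS; nia.
Qed.

Lemma small_ineq P Q R : 2 <= P -> P < Q -> 2 <= R -> R * P < Q.-1 * Q.+1 * R.-1.
Proof.
move=> P2 PQ R2.
have h1 : P * (P + 2) <= Q.-1 * Q.+1 by apply: leq_mul; lia.
apply: (@leq_trans (P * (P + 2) * R.-1)); last by apply: leq_mul.
have -> : R = R.-1.+1 by lia.
rewrite -pred_Sn.
set r := R.-1; have r1 : 1 <= r by lia.
nia.
Qed.

Lemma tot_ineq P Q R u v w d :
  prime P -> prime Q -> prime R -> P < Q -> P != R -> Q != R -> 0 < w ->
  P * (P ^ u * Q ^ v * R ^ w) - P ^ u * Q ^ v * R ^ w <
  totient (P ^ u * Q ^ (d.+2 + v) * R ^ w) + totient (P ^ u * Q ^ (d.+1 + v) * R ^ w).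
Proof.
move=> pP pQ pR PQ PR QR w0.
have PQ' : P != Q by rewrite ltn_eqF.
have P1 := prime_gt1 pP; have Q1 := prime_gt1 pQ; have R1 := prime_gt1 pR.
have split : forall s, totient (P ^ u * Q ^ s * R ^ w) =
    totient (P ^ u) * totient (Q ^ s) * totient (R ^ w).
  move=> s; rewrite totient_coprime ?totient_coprime //.
    by apply/coprimeXl/coprimeXr/cop_pr.
  rewrite coprimeMl; apply/andP; split; apply/coprimeXl/coprimeXr/cop_pr => //.
rewrite !split (@totient_pfactor Q (d.+2+v)) // (@totient_pfactor Q (d.+1+v)) // (@totient_pfactor R w) // /=.
clear split; case: w w0 => [//|w] _ /=.
have hA := @tot_pow_ge P u pP.
set A := P ^ u; set tA := totient A.
have hK : Q ^ v * Q.+1 <= Q ^ (d.+1 + v) + Q ^ (d + v).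
  rewrite !expnD expnS; have : 1 <= Q ^ d by rewrite expn_gt0 ltnW.
  set q := Q ^ d; set B := Q ^ v; nia.
have hS := @small_ineq P Q R P1 PQ R1.
rewrite expnS.
set B := Q ^ v; set C := R ^ w.
set K1 := Q ^ (d.+1 + v); set K2 := Q ^ (d + v).
have A0 : 0 < A by rewrite expn_gt0 ltnW.
have B0 : 0 < B by rewrite expn_gt0 ltnW.
have C0 : 0 < C by rewrite expn_gt0 ltnW.
have E : P * (A * B * (R * C)) - A * B * (R * C) = P.-1 * A * B * C * R by nia.
have E2 : tA * (Q.-1 * K1) * (R.-1 * C) + tA * (Q.-1 * K2) * (R.-1 * C)
   = tA * Q.-1 * (K1 + K2) * R.-1 * C by nia.
rewrite E E2 -(ltn_pmul2r (ltnW P1)).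
apply: (@leq_trans (P.-1 * A * B * C * (Q.-1 * Q.+1 * R.-1))).
  have F0 : 0 < P.-1 * A * B * C by rewrite !muln_gt0 A0 B0 C0 andbT; lia.
  rewrite -mulnA ltn_pmul2l //.
have step : A * P.-1 * Q.-1 * (B * Q.+1) * R.-1 * C <= tA * P * Q.-1 * (K1 + K2) * R.-1 * C.
  by repeat apply: leq_mul => //.
apply: leq_trans (leq_trans _ step) _.
  by apply: eq_leq; nia.
by apply: eq_leq; nia.
Qed.
Lemma deg_primes P Q R aP aQ aR bi bj n :
  prime P -> prime Q -> prime R -> P < Q -> P != R -> Q != R -> 0 < aR ->
  1 <= bi <= aP -> 2 <= bj <= aQ -> n = P ^ aP * Q ^ aQ * R ^ aR ->
  pg_deg n (P ^ (bi - 1) * Q ^ bj) < pg_deg n (P ^ bi * Q ^ bj).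
Proof.
move=> pP pQ pR PQ PR QR aR0 /andP [bi1 biP] /andP [bj2 bjQ] nE.
have PQ' : P != Q by rewrite ltn_eqF.
have P1 := prime_gt1 pP; have Q1 := prime_gt1 pQ; have R1 := prime_gt1 pR.
case: bi bi1 biP => // c _ biP; rewrite subn1 /=.
case: bj bj2 bjQ => [|[|d]] // _ bjQ.
have [u uE] : exists u, aP = c.+1 + u by exists (aP - c.+1); rewrite subnKC.
have [v vE] : exists v, aQ = d.+2 + v by exists (aQ - d.+2); rewrite subnKC.
subst aP aQ.
have QnP : forall k, ~~ (Q %| P ^ k).
  by move=> k; rewrite Euclid_dvdX // dvdn_prime2 // eq_sym (negbTE PQ').
have PnQ : forall k, ~~ (P %| Q ^ k).
  by move=> k; rewrite Euclid_dvdX // dvdn_prime2 // (negbTE PQ').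
have Pc0 : 0 < P ^ c by rewrite expn_gt0 ltnW.
have Pu0 : 0 < P ^ u by rewrite expn_gt0 ltnW.
have Qd0 : 0 < Q ^ d by rewrite expn_gt0 ltnW.
have Qv0 : 0 < Q ^ v by rewrite expn_gt0 ltnW.
have Rw : 1 < R ^ aR.
  move: aR0 R1; clear; case: aR => // w _ R1; rewrite expnS; have : 0 < R ^ w by rewrite expn_gt0 ltnW.
  nia.
have e1Y : ~~ (P ^ c.+1 %| P ^ c * Q ^ d.+2).
  by rewrite expnS (mulnC P) dvdn_pmul2l.
apply: (@deg_general n (P ^ c.+1 * Q ^ d.+2) (P ^ c * Q ^ d.+2) P
   (P ^ u * Q ^ v * R ^ aR) (P ^ c.+1) (P ^ c.+1 * Q)
   (P ^ u * Q ^ (d.+2 + v) * R ^ aR) (P ^ u * Q ^ (d.+1 + v) * R ^ aR)).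
- by rewrite expnS mulnA.
- by [].
- by rewrite muln_gt0 Pc0 expn_gt0 ltnW.
- apply: (leq_trans Rw); apply: leq_pmull; by rewrite muln_gt0 Pu0 Qv0.
- by rewrite nE !expnD !expnS -!multE; ring.
- by rewrite nE !expnD !expnS -!multE; ring.
- by rewrite nE !expnD !expnS -!multE; ring.
- by rewrite expn_gt0 ltnW.
- by rewrite muln_gt0 expn_gt0 ltnW // ltnW.
- exact: dvdn_mulr.
- rewrite dvdn_pmul2l; last by rewrite expn_gt0 ltnW.
  exact: dvdn_exp.
- apply/negP => H; move/negP: (QnP c.+1); apply.
  by apply: dvdn_trans H; apply: dvdn_mull; apply: dvdn_exp.
- apply/negP => H.
  have H1 : Q ^ d.+2 %| P ^ c.+1 * Q by apply: dvdn_trans H; apply: dvdn_mull.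
  rewrite expnS mulnC dvdn_pmul2r in H1; last exact: ltnW.
  by move/negP: (QnP c.+1); apply; apply: dvdn_trans H1; apply: dvdn_exp.
- exact: e1Y.
- by apply: contra e1Y; apply: dvdn_trans; apply: dvdn_mulr.
- rewrite -{1}(muln1 (P ^ c.+1)) eqn_pmul2l; last by rewrite expn_gt0 ltnW.
  by rewrite neq_ltn Q1.
- exact: tot_ineq.
Qed.

Theorem lemma5p1 (p1 p2 p3 a1 a2 a3 n : nat) (i j : 'I_3) (bi bj : nat) :
  prime p1 -> prime p2 -> prime p3 ->
  p1 < p2 -> p2 < p3 ->
  0 < a1 -> 0 < a2 -> 0 < a3 ->
  n = p1 ^ a1 * p2 ^ a2 * p3 ^ a3 ->
  i < j ->
  1 <= bi <= tri a1 a2 a3 i ->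
  2 <= bj <= tri a1 a2 a3 j ->
  pg_deg n (tri p1 p2 p3 i ^ bi * tri p1 p2 p3 j ^ bj) >
  pg_deg n (tri p1 p2 p3 i ^ (bi - 1) * tri p1 p2 p3 j ^ bj).
Proof.
move=> p1P p2P p3P l12 l23 a10 a20 a30 nE.
case: i j => [[|[|[|i]]] //= Hi] [[|[|[|j]]] //= Hj] _; rewrite /tri /= => Hbi Hbj.
- apply: (@deg_primes p1 p2 p3 a1 a2 a3 bi bj n p1P p2P p3P l12 _ _ a30 Hbi Hbj nE).
    by rewrite neq_ltn (ltn_trans l12 l23).
  by rewrite neq_ltn l23.
- apply: (@deg_primes p1 p3 p2 a1 a3 a2 bi bj n p1P p3P p2P (ltn_trans l12 l23) _ _ a20 Hbi Hbj).
  + by rewrite neq_ltn l12.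
  + by rewrite neq_ltn l23 orbT.
  + by rewrite nE mulnAC.
- apply: (@deg_primes p2 p3 p1 a2 a3 a1 bi bj n p2P p3P p1P l23 _ _ a10 Hbi Hbj).
  + by rewrite neq_ltn l12 orbT.
  + by rewrite neq_ltn (ltn_trans l12 l23) orbT.
  + by rewrite nE -mulnA mulnC.
Qed.
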